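(* For every $\phi\in\mathcal{L}$ and every segment $\mathfrak{s}$ of the canonical model $\mathfrak{M}^{C}$: (1) $\mathfrak{M}^{C},\mathfrak{s}\Vdash^+\phi$ iff $\phi\in\mathbf{h}(\mathfrak{s})$; (2) $\mathfrak{M}^{C},\mathfrak{s}\Vdash^-\phi$ iff ${\sim}\phi\in\mathbf{h}(\mathfrak{s})$.
   Context: Fix a countable set $\mathsf{Prop}$ of propositional variables. The language $\mathcal{L}$ is given by the grammar $\phi::=p\mid{\sim}\phi\mid(\phi\wedge\phi)\mid(\phi\vee\phi)\mid(\phi\to\phi)\mid\Box\phi\mid\Diamond\phi$ with $p\in\mathsf{Prop}$. $\phi\leftrightarrow\chi$ abbreviates $(\phi\to\chi)\wedge(\chi\to\phi)$. Semantics. A structure $\langle W,\le,R^+_\Box,R^-_\Box,R^+_\Diamond,R^-_\Diamond,v^+,v^-\rangle$ with $W\ne\varnothing$, $\le$ a preorder, four arbitrary binary relations, and $v^+,v^-:\mathsf{Prop}\to2^W$ upward closed under $\le$ is a $\mathsf{CN4K}$ model; $R(w)=\{w'\mid wRw'\}$. Support: $w\Vdash^\pm p$ iff $w\in v^\pm(p)$; $w\Vdash^+{\sim}\phi$ iff $w\Vdash^-\phi$; $w\Vdash^-{\sim}\phi$ iff $w\Vdash^+\phi$; $w\Vdash^+\phi\wedge\chi$ iff both; $w\Vdash^-\phi\wedge\chi$ iff $w\Vdash^-\phi$ or $w\Vdash^-\chi$; $w\Vdash^+\phi\vee\chi$ iff $w\Vdash^+\phi$ or $w\Vdash^+\chi$;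 $w\Vdash^-\phi\vee\chi$ iff both negatively supported; $w\Vdash^+\phi\to\chi$ iff for all $w'\ge w$, $w'\Vdash^+\phi$ implies $w'\Vdash^+\chi$; $w\Vdash^-\phi\to\chi$ iff $w\Vdash^+\phi$ and $w\Vdash^-\chi$; $w\Vdash^+\Box\phi$ iff $\forall w'\ge w\ \forall w''\in R^+_\Box(w')$: $w''\Vdash^+\phi$; $w\Vdash^-\Box\phi$ iff $\forall w'\ge w\ \exists w''\in R^-_\Box(w')$: $w''\Vdash^-\phi$; $w\Vdash^+\Diamond\phi$ iff $\forall w'\ge w\ \exists w''\in R^+_\Diamond(w')$: $w''\Vdash^+\phi$; $w\Vdash^-\Diamond\phi$ iff $\forall w'\ge w\ \forall w''\in R^-_\Diamond(w')$: $w''\Vdash^-\phi$. Calculus. $\mathcal{H}\mathsf{N4}$ has as axioms all $\mathcal{L}$-instances of: $\phi\to(\chi\to\phi)$; $(\phi\to(\chi\to\psi))\to((\phi\to\chi)\to(\phi\to\psi))$; $\phi\wedge\chi\to\phi$; $\phi\wedge\chi\to\chi$; $\phi\to(\chi\to\phi\wedge\chi)$; $\phi\to\phi\vee\chi$; $\chi\to\phi\vee\chi$; $(\phi\to\psi)\to((\chi\to\psi)\to(\phi\vee\chi\to\psi))$; ${\sim}{\sim}\phi\leftrightarrow\phi$; ${\sim}(\phi\wedge\chi)\leftrightarrow({\sim}\phi\vee{\sim}\chi)$; ${\sim}(\phi\vee\chi)\leftrightarrow({\sim}\phi\wedge{\sim}\chi)$; ${\sim}(\phi\to\chi)\leftrightarrow(\phi\wedge{\sim}\chi)$;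 and modus ponens. $\mathcal{H}\mathsf{CN4K}$ adds the axiom schemes $\Box(\phi\to\phi)$; ${\sim}\Diamond{\sim}(\phi\to\phi)$; $(\Box\phi\wedge\Box\chi)\to\Box(\phi\wedge\chi)$; $({\sim}\Diamond\phi\wedge{\sim}\Diamond\chi)\to{\sim}\Diamond(\phi\vee\chi)$, and the rules: from $\vdash\phi\to\chi$ infer $\vdash\Box\phi\to\Box\chi$; from $\vdash\phi\to\chi$ infer $\vdash\Diamond\phi\to\Diamond\chi$; from $\vdash{\sim}\phi\to{\sim}\chi$ infer $\vdash{\sim}\Box\phi\to{\sim}\Box\chi$; from $\vdash{\sim}\phi\to{\sim}\chi$ infer $\vdash{\sim}\Diamond\phi\to{\sim}\Diamond\chi$. $\Gamma\vdash_{\mathcal{H}\mathsf{CN4K}}\phi$ means there is a finite sequence ending in $\phi$ of axiom instances, members of $\Gamma$, and rule consequences of earlier members, the modal rules being applied only to theorems. A set $\Xi\subseteq\mathcal{L}$ is saturated if it is deductively closed under $\vdash_{\mathcal{H}\mathsf{CN4K}}$ and prime ($\xi\vee\xi'\in\Xi$ implies $\xi\in\Xi$ or $\xi'\in\Xi$). A segment is a tuple $\mathfrak{s}=\langle\Xi,\Phi^+_\Box,\Phi^-_\Box,\Phi^+_\Diamond,\Phi^-_\Diamond\rangle$ where $\Xi$ is a saturated set (the head, $\mathbf{h}(\mathfrak{s})=\Xi$) and each $\Phi^\bullet_\heartsuit$ is a set (possibly empty) of saturated sets such that: if $\Box\phi\in\Xi$ then $\phi\in\Delta$ for every $\Delta\in\Phi^+_\Box$;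 if ${\sim}\Box\phi\in\Xi$ then ${\sim}\phi\in\Delta$ for some $\Delta\in\Phi^-_\Box$; if $\Diamond\phi\in\Xi$ then $\phi\in\Delta$ for some $\Delta\in\Phi^+_\Diamond$; if ${\sim}\Diamond\phi\in\Xi$ then ${\sim}\phi\in\Delta$ for every $\Delta\in\Phi^-_\Diamond$. The canonical model $\mathfrak{M}^{C}$ has as states all segments, $\mathfrak{s}\le^{C}\mathfrak{s}'$ iff $\mathbf{h}(\mathfrak{s})\subseteq\mathbf{h}(\mathfrak{s}')$, $\mathfrak{s}\,{R^\bullet_\heartsuit}^{C}\,\mathfrak{s}'$ iff $\mathbf{h}(\mathfrak{s}')\in\Phi^\bullet_\heartsuit$ (where $\Phi^\bullet_\heartsuit$ is the corresponding component of $\mathfrak{s}$), for $\bullet\in\{+,-\}$, $\heartsuit\in\{\Box,\Diamond\}$; $\mathfrak{s}\in {v^+}^{C}(p)$ iff $p\in\mathbf{h}(\mathfrak{s})$, and $\mathfrak{s}\in{v^-}^{C}(p)$ iff ${\sim}p\in\mathbf{h}(\mathfrak{s})$. *)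

(* Defs.v *)
From Stdlib Require Import Bool.

Inductive form : Type :=
| Var : nat -> form
| Neg : form -> form            (* strong negation ~ *)
| And : form -> form -> form
| Or  : form -> form -> form
| Imp : form -> form -> form
| Box : form -> form
| Dia : form -> form.

Definition Iff (a b : form) : form := And (Imp a b) (Imp b a).

Inductive axiom : form -> Prop :=
| A1 : forall p q, axiom (Imp p (Imp q p))
| A2 : forall p q r, axiom (Imp (Imp p (Imp q r)) (Imp (Imp p q) (Imp p r)))
| A3 : forall p q, axiom (Imp (And p q) p)
| A4 : forall p q, axiom (Imp (And p q) q)
| A5 : forall p q, axiom (Imp p (Imp q (And p q)))
| A6 : forall p q, axiom (Imp p (Or p q))
| A7 : forall p q, axiom (Imp q (Or p q))
| A8 : forall p q r, axiom (Imp (Imp p r) (Imp (Imp q r) (Imp (Or p q) r)))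
| A9 : forall p, axiom (Iff (Neg (Neg p)) p)
| A10 : forall p q, axiom (Iff (Neg (And p q)) (Or (Neg p) (Neg q)))
| A11 : forall p q, axiom (Iff (Neg (Or p q)) (And (Neg p) (Neg q)))
| A12 : forall p q, axiom (Iff (Neg (Imp p q)) (And p (Neg q)))
| K1 : forall p, axiom (Box (Imp p p))
| K2 : forall p, axiom (Neg (Dia (Neg (Imp p p))))
| K3 : forall p q, axiom (Imp (And (Box p) (Box q)) (Box (And p q)))
| K4 : forall p q, axiom (Imp (And (Neg (Dia p)) (Neg (Dia q))) (Neg (Dia (Or p q)))).

Definition emptyset : form -> Prop := fun _ => False.

Inductive prf (Gamma : form -> Prop) : form -> Prop :=
| prf_ax : forall p, axiom p -> prf Gamma p
| prf_hyp : forall p, Gamma p -> prf Gamma p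
| prf_mp : forall p q, prf Gamma (Imp p q) -> prf Gamma p -> prf Gamma q
| prf_box : forall p q, prf emptyset (Imp p q) -> prf Gamma (Imp (Box p) (Box q))
| prf_dia : forall p q, prf emptyset (Imp p q) -> prf Gamma (Imp (Dia p) (Dia q))
| prf_nbox : forall p q, prf emptyset (Imp (Neg p) (Neg q)) ->
    prf Gamma (Imp (Neg (Box p)) (Neg (Box q)))
| prf_ndia : forall p q, prf emptyset (Imp (Neg p) (Neg q)) ->
    prf Gamma (Imp (Neg (Dia p)) (Neg (Dia q))).

Definition saturated (X : form -> Prop) : Prop :=
  (forall p, prf X p -> X p) /\
  (forall p q, X (Or p q) -> X p \/ X q).

Record segment : Type := Segment {
  hd : form -> Prop;
  PhiBoxP : (form -> Prop) -> Prop;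
  PhiBoxN : (form -> Prop) -> Prop;
  PhiDiaP : (form -> Prop) -> Prop;
  PhiDiaN : (form -> Prop) -> Prop;
  hd_sat : saturated hd;
  PhiBoxP_sat : forall D, PhiBoxP D -> saturated D;
  PhiBoxN_sat : forall D, PhiBoxN D -> saturated D;
  PhiDiaP_sat : forall D, PhiDiaP D -> saturated D;
  PhiDiaN_sat : forall D, PhiDiaN D -> saturated D;
  seg_box_pos : forall p, hd (Box p) -> forall D, PhiBoxP D -> D p;
  seg_box_neg : forall p, hd (Neg (Box p)) -> exists D, PhiBoxN D /\ D (Neg p);
  seg_dia_pos : forall p, hd (Dia p) -> exists D, PhiDiaP D /\ D p;
  seg_dia_neg : forall p, hd (Neg (Dia p)) -> forall D, PhiDiaN D -> D (Neg p)
}.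

(* The data of a CN4K structure (support only depends on these data). *)
Record structure : Type := Structure {
  W : Type;
  le : W -> W -> Prop;
  RBoxP : W -> W -> Prop;
  RBoxN : W -> W -> Prop;
  RDiaP : W -> W -> Prop;
  RDiaN : W -> W -> Prop;
  vP : nat -> W -> Prop;
  vN : nat -> W -> Prop
}.

Definition is_CN4K_model (M : structure) : Prop :=
  inhabited (W M) /\
  (forall w, le M w w) /\
  (forall u v w, le M u v -> le M v w -> le M u w) /\
  (forall p u v, le M u v -> vP M p u -> vP M p v) /\
  (forall p u v, le M u v -> vN M p u -> vN M p v).

(* supp M w true phi  : w ||-+ phi ;  supp M w false phi : w ||-- phi *)
Fixpoint supp (M : structure) (w : W M) (b : bool) (phi : form) {struct phi} : Prop :=
  match phi with
  | Var p => if b then vP M p w else vN M p w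
  | Neg a => supp M w (negb b) a
  | And a c => if b then supp M w true a /\ supp M w true c
               else supp M w false a \/ supp M w false c
  | Or a c => if b then supp M w true a \/ supp M w true c
              else supp M w false a /\ supp M w false c
  | Imp a c => if b then (forall w', le M w w' -> supp M w' true a -> supp M w' true c)
               else supp M w true a /\ supp M w false c
  | Box a => if b then (forall w', le M w w' -> forall w'', RBoxP M w' w'' -> supp M w'' true a)
             else (forall w', le M w w' -> exists w'', RBoxN M w' w'' /\ supp M w'' false a)
  | Dia a => if b then (forall w', le M w w' -> exists w'', RDiaP M w' w'' /\ supp M w'' true a)
             else (forall w', le M w w' -> forall w'', RDiaN M w' w'' -> supp M w'' false a)
  end.

Definition canonical : structure :=
  {| W := segment;
     le := fun s s' => forall p, hd s p -> hd s' p;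
     RBoxP := fun s s' => PhiBoxP s (hd s');
     RBoxN := fun s s' => PhiBoxN s (hd s');
     RDiaP := fun s s' => PhiDiaP s (hd s');
     RDiaN := fun s s' => PhiDiaN s (hd s');
     vP := fun p s => hd s (Var p);
     vN := fun p s => hd s (Neg (Var p)) |}.

(* Main.v *)
Require Import Defs.
From Stdlib Require Import Classical Arith Lia Cantor.

Lemma prf_mono : forall (G G' : form -> Prop) p,
  (forall x, G x -> G' x) -> prf G p -> prf G' p.
Proof.
  intros G G' p HG H; induction H.
  - apply prf_ax; auto.
  - apply prf_hyp; auto.
  - eapply prf_mp; eauto.
  - apply prf_box; auto.
  - apply prf_dia; auto.
  - apply prf_nbox; auto.
  - apply prf_ndia; auto.
Qed.

Lemma thm_any : forall G p, prf emptyset p -> prf G p.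
Proof. intros G p; apply prf_mono; intros x []. Qed.

Lemma prf_id : forall G a, prf G (Imp a a).
Proof.
  intros G a.
  eapply prf_mp. eapply prf_mp. apply prf_ax, (A2 a (Imp a a) a).
  apply prf_ax, A1. apply prf_ax, (A1 a a).
Qed.

Lemma prf_K : forall G a b, prf G b -> prf G (Imp a b).
Proof. intros. eapply prf_mp. apply prf_ax, A1. auto. Qed.

Lemma deduction : forall G a b, prf (fun y => G y \/ y = a) b -> prf G (Imp a b).
Proof.
  intros G a b H; remember (fun y => G y \/ y = a) as Gm eqn:EG; induction H.
  - apply prf_K, prf_ax; auto.
  - rewrite EG in H; hnf in H; destruct H as [H|H]. apply prf_K, prf_hyp; auto. subst; apply prf_id.
  - eapply prf_mp. eapply prf_mp. apply prf_ax, A2. eauto. eauto.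
  - apply prf_K, prf_box; auto.
  - apply prf_K, prf_dia; auto.
  - apply prf_K, prf_nbox; auto.
  - apply prf_K, prf_ndia; auto.
Qed.

Lemma iff1 : forall G a b, prf G (Iff a b) -> prf G (Imp a b).
Proof. intros. eapply prf_mp. apply prf_ax, A3. eauto. Qed.
Lemma iff2 : forall G a b, prf G (Iff a b) -> prf G (Imp b a).
Proof. intros. eapply prf_mp. apply prf_ax, A4. eauto. Qed.

Lemma hypS : forall (G : form -> Prop) a, prf (fun y => G y \/ y = a) a.
Proof. intros; apply prf_hyp; auto. Qed.

Definition full : form -> Prop := fun _ => True.
Lemma full_sat : saturated full.
Proof. split; intros; unfold full; auto. Qed.

Section Sat.
Variable X : form -> Prop.
Hypothesis HX : saturated X.
Lemma sat_prf : forall p, prf X p -> X p.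
Proof. apply HX. Qed.
Lemma sat_thm : forall p, prf emptyset p -> X p.
Proof. intros; apply sat_prf, thm_any; auto. Qed.
Lemma sat_mp : forall a b, X (Imp a b) -> X a -> X b.
Proof. intros; apply sat_prf; eapply prf_mp; apply prf_hyp; eauto. Qed.
Lemma sat_ax : forall p, axiom p -> X p.
Proof. intros; apply sat_prf, prf_ax; auto. Qed.
Lemma sat_iffE1 : forall a b, axiom (Iff a b) -> X a -> X b.
Proof. intros. apply sat_mp with a; auto. apply sat_prf, iff1, prf_ax; auto. Qed.
Lemma sat_iffE2 : forall a b, axiom (Iff a b) -> X b -> X a.
Proof. intros. apply sat_mp with b; auto. apply sat_prf, iff2, prf_ax; auto. Qed.
Lemma sat_and : forall a b, X (And a b) <-> X a /\ X b.
Proof.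
  intros; split.
  - intros; split; eapply sat_mp; eauto; apply sat_ax; constructor.
  - intros [Ha Hb]. apply sat_mp with b; auto. apply sat_mp with a; auto. apply sat_ax, A5.
Qed.
Lemma sat_or : forall a b, X (Or a b) <-> X a \/ X b.
Proof.
  intros; split.
  - apply HX.
  - intros [?|?]; eapply sat_mp; eauto; apply sat_ax; constructor.
Qed.
End Sat.

Fixpoint code (f : form) : nat :=
  match f with
  | Var n => to_nat (0, n)
  | Neg a => to_nat (1, code a)
  | And a b => to_nat (2, to_nat (code a, code b))
  | Or a b => to_nat (3, to_nat (code a, code b))
  | Imp a b => to_nat (4, to_nat (code a, code b))
  | Box a => to_nat (5, code a)
  | Dia a => to_nat (6, code a)
  end.

Lemma to_nat_inj : forall p q, to_nat p = to_nat q -> p = q.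
Proof. intros p q H. rewrite <- (cancel_of_to p), <- (cancel_of_to q), H; auto. Qed.

Lemma pair_split : forall (a b c d : nat), (a, b) = (c, d) -> a = c /\ b = d.
Proof. intros. split; [apply (f_equal fst) in H|apply (f_equal snd) in H]; exact H. Qed.

Lemma code_inj : forall f g, code f = code g -> f = g.
Proof.
  induction f; destruct g; cbn [code]; intro H; apply to_nat_inj, pair_split in H;
  destruct H as [Hf Hs]; try discriminate Hf.
  all: try (f_equal; auto; fail).
  all: apply to_nat_inj, pair_split in Hs; destruct Hs; f_equal; auto.
Qed.

Section Lind.
Variable G : form -> Prop.
Variable phi : form.

Fixpoint Dl (n : nat) : form -> Prop :=
  match n with
  | 0 => G
  | S n => fun x => Dl n x \/ (code x = n /\ ~ prf (fun y => Dl n y \/ y = x) phi)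
  end.

Lemma Dl_mono : forall n m, n <= m -> forall x, Dl n x -> Dl m x.
Proof.
  intros n m H; induction H; auto. intros x Hx; simpl; left; auto.
Qed.

Definition Dlim : form -> Prop := fun x => exists n, Dl n x.

Lemma Dlim_compact : forall p, prf Dlim p -> exists n, prf (Dl n) p.
Proof.
  intros p H; remember Dlim as Gm eqn:EG; induction H.
  - exists 0; apply prf_ax; auto.
  - rewrite EG in H; destruct H as [n Hn]; exists n; apply prf_hyp; auto.
  - destruct (IHprf1 EG) as [n1 H1], (IHprf2 EG) as [n2 H2].
    exists (max n1 n2). eapply prf_mp.
    + eapply prf_mp with (p := Imp p q); [apply prf_id|].
      eapply prf_mono; [|exact H1]. apply Dl_mono; lia.
    + eapply prf_mono; [|exact H2]. apply Dl_mono; lia.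
  - exists 0; apply prf_box; auto.
  - exists 0; apply prf_dia; auto.
  - exists 0; apply prf_nbox; auto.
  - exists 0; apply prf_ndia; auto.
Qed.

Hypothesis Hcons : ~ prf G phi.

Lemma Dl_cons : forall n, ~ prf (Dl n) phi.
Proof.
  induction n; simpl; auto.
  destruct (classic (exists x, code x = n /\ ~ prf (fun y => Dl n y \/ y = x) phi))
    as [[x [Hx Hc]]|Hno].
  - intro Hp; apply Hc. eapply prf_mono; [|exact Hp].
    intros y [Hy|[Hy Hc']]; auto. right; apply code_inj; congruence.
  - intro Hp; apply IHn. eapply prf_mono; [|exact Hp].
    intros y [Hy|[Hy Hc']]; auto. exfalso; apply Hno; eauto.
Qed.

Lemma Dlim_cons : ~ prf Dlim phi.
Proof. intro H; destruct (Dlim_compact _ H) as [n Hn]; eapply Dl_cons; eauto. Qed.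

Lemma Dlim_bad : forall x, ~ Dlim x -> prf Dlim (Imp x phi).
Proof.
  intros x Hx. apply deduction.
  apply NNPP; intro Hn. apply Hx. exists (S (code x)). simpl. right; split; auto.
  intro Hp; apply Hn. eapply prf_mono; [|exact Hp].
  intros y [Hy|Hy]; [left; exists (code x); auto|right; auto].
Qed.

Lemma lindenbaum_aux : saturated Dlim /\ (forall x, G x -> Dlim x) /\ ~ Dlim phi.
Proof.
  split; [split|split].
  - intros p Hp. apply NNPP; intro Hn. apply Dlim_cons.
    apply prf_mp with p; [apply Dlim_bad; auto|auto].
  - intros p q Hpq. apply NNPP; intro Hn.
    apply Dlim_cons.
    apply prf_mp with (Or p q); [apply prf_mp with (Imp q phi); [apply prf_mp with (Imp p phi); [apply prf_ax, A8|]|]|].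
    + apply Dlim_bad; intro; tauto.
    + apply Dlim_bad; intro; tauto.
    + apply prf_hyp; auto.
  - intros x Hx; exists 0; auto.
  - intro H; apply Dlim_cons, prf_hyp; auto.
Qed.
End Lind.

Lemma lindenbaum : forall G phi, ~ prf G phi ->
  exists D, saturated D /\ (forall x, G x -> D x) /\ ~ D phi.
Proof. intros G phi H. exists (Dlim G phi). apply lindenbaum_aux; auto. Qed.

Definition mkseg (X : form -> Prop) (HX : saturated X) : segment.
Proof.
  refine (Segment X (fun _ => False) (fun D => D = full) (fun D => D = full)
            (fun _ => False) HX _ _ _ _ _ _ _ _).
  all: try (intros; contradiction).
  all: try (intros; subst; apply full_sat).
  all: intros; exists full; split; unfold full; auto.
Defined.

Lemma box_thm : forall X, saturated X -> forall p, prf emptyset p -> X (Box p).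
Proof.
  intros X HX p Hp.
  apply sat_mp with (Box (Imp p p)); auto. 2: apply sat_ax; auto; constructor.
  apply sat_thm; auto. apply prf_box. apply prf_K; auto.
Qed.

Lemma mp_thm : forall p q, prf emptyset (Imp (And (Imp p q) p) q).
Proof.
  intros. apply deduction.
  eapply prf_mp; [eapply prf_mp; [apply prf_ax, A3|]|eapply prf_mp; [apply prf_ax, A4|]];
  apply hypS.
Qed.

Lemma box_closed : forall X, saturated X ->
  forall c, prf (fun x => X (Box x)) c -> X (Box c).
Proof.
  intros X HX c H; remember (fun x => X (Box x)) as Gm eqn:EG; induction H.
  - apply box_thm; auto. apply prf_ax; auto.
  - rewrite EG in H; auto.
  - apply sat_mp with (Box (And (Imp p q) p)); auto.
    + apply sat_thm; auto. apply prf_box, mp_thm.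
    + apply sat_mp with (And (Box (Imp p q)) (Box p)); auto. apply sat_ax; auto; apply K3.
      apply sat_and; auto.
  - apply box_thm; auto. apply prf_box; auto.
  - apply box_thm; auto. apply prf_dia; auto.
  - apply box_thm; auto. apply prf_nbox; auto.
  - apply box_thm; auto. apply prf_ndia; auto.
Qed.

Definition TD (X : form -> Prop) : form -> Prop :=
  fun x => exists psi, x = Neg psi /\ X (Neg (Dia psi)).

Lemma dia_closed : forall X, saturated X ->
  forall c, prf (TD X) c -> exists psi, X (Neg (Dia psi)) /\ prf emptyset (Imp (Neg psi) c).
Proof.
  intros X HX c H.
  assert (Hth : forall c, prf emptyset c ->
     exists psi, X (Neg (Dia psi)) /\ prf emptyset (Imp (Neg psi) c)).
  { intros c0 Hc. exists (Neg (Imp c0 c0)); split.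
    apply sat_ax; auto; constructor. apply prf_K; auto. }
  remember (TD X) as Gm eqn:EG; induction H.
  - apply Hth, prf_ax; auto.
  - rewrite EG in H; destruct H as [psi [-> Hp]]. exists psi; split; auto. apply prf_id.
  - destruct (IHprf1 EG) as [p1 [H1 T1]], (IHprf2 EG) as [p2 [H2 T2]].
    exists (Or p1 p2); split.
    + apply sat_mp with (And (Neg (Dia p1)) (Neg (Dia p2))); auto. apply sat_ax; auto; apply K4. apply sat_and; auto.
    + apply deduction.
      assert (Ha : prf (fun y => emptyset y \/ y = Neg (Or p1 p2)) (And (Neg p1) (Neg p2))).
      { eapply prf_mp. apply iff1, prf_ax, A11. apply hypS. }
      eapply prf_mp; [eapply prf_mp|eapply prf_mp].
      * apply thm_any; exact T1.
      * eapply prf_mp; [apply prf_ax, A3|exact Ha].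
      * apply thm_any; exact T2.
      * eapply prf_mp; [apply prf_ax, A4|exact Ha].
  - apply Hth, prf_box; auto.
  - apply Hth, prf_dia; auto.
  - apply Hth, prf_nbox; auto.
  - apply Hth, prf_ndia; auto.
Qed.

Lemma single_ded : forall a b, prf (fun y => y = a) b -> prf emptyset (Imp a b).
Proof.
  intros a b H. apply deduction. eapply prf_mono; [|exact H]. intros; auto.
Qed.

Ltac segtac := intros; cbv beta in *; subst;
  first [ apply full_sat | contradiction | (exists full; split; unfold full; auto; fail)
        | solve [auto] | solve [firstorder] ].


Theorem lemma2 : forall (phi : form) (s : segment),
  (supp canonical s true phi <-> hd s phi) /\
  (supp canonical s false phi <-> hd s (Neg phi)).
Proof.
  induction phi; intro s; pose proof (hd_sat s) as HX; simpl.
  - split; tauto.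
  - destruct (IHphi s) as [I1 I2]. split; auto.
    rewrite I1; split; intro H.
    + eapply sat_iffE2; eauto. apply A9.
    + eapply sat_iffE1; eauto. apply A9.
  - destruct (IHphi1 s) as [I1 I2], (IHphi2 s) as [J1 J2].
    rewrite I1, I2, J1, J2, sat_and by auto. split; [tauto|].
    rewrite <- sat_or by auto. split; intro H.
    + eapply sat_iffE2; eauto. apply A10.
    + eapply sat_iffE1; eauto. apply A10.
  - destruct (IHphi1 s) as [I1 I2], (IHphi2 s) as [J1 J2].
    rewrite I1, I2, J1, J2, sat_or by auto. split; [tauto|].
    rewrite <- sat_and by auto. split; intro H.
    + eapply sat_iffE2; eauto. apply A11.
    + eapply sat_iffE1; eauto. apply A11.
  - destruct (IHphi1 s) as [I1 I2], (IHphi2 s) as [J1 J2].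
    split.
    + split.
      * intro H. apply NNPP; intro Hn.
        assert (Hc : ~ prf (fun y => hd s y \/ y = phi1) phi2).
        { intro Hp; apply Hn, sat_prf; auto. apply deduction; auto. }
        destruct (lindenbaum _ _ Hc) as [D [HD [HsD HnD]]].
        apply HnD. set (s' := mkseg D HD).
        apply (proj1 (IHphi2 s')). apply H.
        { intros p Hp; apply HsD; auto. }
        apply (proj1 (IHphi1 s')). apply HsD; auto.
      * intros H w' Hw' Ha. apply (IHphi2 w'). apply (IHphi1 w') in Ha.
        eapply sat_mp; [apply hd_sat| |]; eauto.
    + rewrite I1, J2, <- sat_and by auto. split; intro H.
      * eapply sat_iffE2; eauto. apply A12.
      * eapply sat_iffE1; eauto. apply A12.
  - split; split.
    + intro H. apply NNPP; intro Hn.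
      assert (Hc : ~ prf (fun x => hd s (Box x)) phi).
      { intro Hp; apply Hn; apply box_closed; auto. }
      destruct (lindenbaum _ _ Hc) as [D [HD [HsD HnD]]].
      simple refine (let s' := Segment (hd s) (fun E => E = D) (fun E => E = full)
                  (fun E => E = full) (fun _ => False) HX _ _ _ _ _ _ _ _ in _).
      all: try solve [segtac].
      apply HnD. apply (proj1 (IHphi (mkseg D HD))).
      apply (H s'); unfold s'; simpl; auto.
    + intros H w' Hw' w'' Hr. apply (IHphi w''). simpl in Hr.
      eapply seg_box_pos; [apply Hw'; exact H | exact Hr].
    + intro H. apply NNPP; intro Hn.
      simple refine (let s' := Segment (hd s) (fun _ => False)
                  (fun E => saturated E /\ ~ E (Neg phi))
                  (fun E => E = full) (fun _ => False) HX _ _ _ _ _ _ _ _ in _).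
      all: try solve [segtac].
      all: try (intros D [HD _]; auto).
      { intros p Hp.
        assert (Hc : ~ prf (fun y => y = Neg p) (Neg phi)).
        { intro Hq; apply Hn. eapply sat_mp; eauto.
          apply sat_thm; auto. apply prf_nbox, single_ded; auto. }
        destruct (lindenbaum _ _ Hc) as [D [HD [HsD HnD]]].
        exists D; auto. }
      destruct (H s') as [w'' [[_ Hw] Hs]]; [unfold s'; simpl; auto|].
      apply Hw, (IHphi w''); auto.
    + intros H w' Hw'. apply Hw' in H.
      destruct (seg_box_neg w' _ H) as [D [HD1 HD2]].
      exists (mkseg D (PhiBoxN_sat w' D HD1)); simpl; split; auto.
      apply (IHphi (mkseg D (PhiBoxN_sat w' D HD1))); auto.
  - split; split.
    + intro H. apply NNPP; intro Hn.
      simple refine (let s' := Segment (hd s) (fun _ => False) (fun E => E = full)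
                  (fun E => saturated E /\ ~ E phi)
                  (fun _ => False) HX _ _ _ _ _ _ _ _ in _).
      all: try solve [segtac].
      all: try (intros D [HD _]; auto).
      { intros p Hp.
        assert (Hc : ~ prf (fun y => y = p) phi).
        { intro Hq; apply Hn. eapply sat_mp; eauto.
          apply sat_thm; auto. apply prf_dia, single_ded; auto. }
        destruct (lindenbaum _ _ Hc) as [D [HD [HsD HnD]]].
        exists D; auto. }
      destruct (H s') as [w'' [[_ Hw] Hs]]; [unfold s'; simpl; auto|].
      apply Hw, (IHphi w''); auto.
    + intros H w' Hw'. apply Hw' in H.
      destruct (seg_dia_pos w' _ H) as [D [HD1 HD2]].
      exists (mkseg D (PhiDiaP_sat w' D HD1)); simpl; split; auto.
      apply (IHphi (mkseg D (PhiDiaP_sat w' D HD1))); auto.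
    + intro H. apply NNPP; intro Hn.
      assert (Hc : ~ prf (TD (hd s)) (Neg phi)).
      { intro Hp. destruct (dia_closed _ HX _ Hp) as [psi [H1 H2]].
        apply Hn. eapply sat_mp; eauto. apply sat_thm; auto. apply prf_ndia; auto. }
      destruct (lindenbaum _ _ Hc) as [D [HD [HsD HnD]]].
      simple refine (let s' := Segment (hd s) (fun _ => False) (fun E => E = full)
                  (fun E => E = full) (fun E => E = D) HX _ _ _ _ _ _ _ _ in _).
      all: try solve [segtac].
      all: try (intros p Hp E HE; cbv beta in HE; subst; apply HsD; exists p; auto).
      apply HnD. apply (proj2 (IHphi (mkseg D HD))).
      apply (H s'); unfold s'; simpl; auto.
    + intros H w' Hw' w'' Hr. apply (IHphi w''). simpl in Hr.
      eapply seg_dia_neg; [apply Hw'; exact H | exact Hr].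
Qed.
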